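(* Let $A\subset\mathbf{Z}_{\geq0}$ be finite with $0\in A$, $N=\#A\geq 2$, $A(x)=\sum_{a\in A}x^a$. Suppose $A(x)$ has a spectrum $\{\theta_1,\dots,\theta_{N-1}\}$ with $\theta_1\notin\mathbf{Q}$. Then $A(x)$ has at least $N-1$ distinct roots $x$ with $|x|\neq 1$.
   Context: A set $\{\theta_1,\dots,\theta_{N-1}\}\subset(0,1)$ is called a spectrum for $A(x)$ if the $\theta_j$ are pairwise distinct and, with $\theta_0=0$, $A(e^{2\pi i(\theta_i-\theta_j)})=0$ for all $0\leq i,j\leq N-1$ with $i\neq j$. *)

(* Defs.v *)
From HB Require Import structures.
From mathcomp Require Import all_boot all_order all_algebra.
From mathcomp Require Import finmap.
From mathcomp Require Import complex.
From mathcomp Require Import reals trigo.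
Set Implicit Arguments. Unset Strict Implicit. Unset Printing Implicit Defensive.
Import Order.TTheory GRing.Theory Num.Theory.
Local Open Scope ring_scope.
Local Open Scope fset_scope.

Definition Apoly {R : realType} (A : {fset nat}) : {poly R[i]} :=
  \sum_(a <- A) 'X^a.

Definition expi (R : realType) (t : R) : R[i] :=
  Complex (cos (2 * pi * t)) (sin (2 * pi * t)).

(* theta 1, ..., theta (N-1) is a spectrum for A(x), with N = #A and the
   convention theta 0 = 0 (the value theta 0 given by the function is
   required to be 0). *)
Definition is_spectrum (R : realType) (A : {fset nat}) (theta : nat -> R) :=
  let N := #|` A| in
  [/\ theta 0%N = 0,
      (forall i, (0 < i < N)%N -> 0 < theta i < 1),
      (forall i j, (0 < i < N)%N -> (0 < j < N)%N -> i != j -> theta i != theta j)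
    & (forall i j, (i < N)%N -> (j < N)%N -> i != j ->
         (@Apoly R A).[expi (theta i - theta j)] = 0)].

(* Main.v *)
Require Import Defs.
From HB Require Import structures.
From mathcomp Require Import all_boot all_order all_algebra.
From mathcomp Require Import finmap.
From mathcomp Require Import complex.
From mathcomp Require Import reals trigo.
From mathcomp Require Import lra.
From mathcomp Require Import vector falgebra fieldext separable galois closed_field.
From Stdlib Require Import Classical.
Import Order.TTheory GRing.Theory Num.Theory.
Local Open Scope ring_scope.

Lemma eig_pow (F : fieldType) n (B : 'M[F]_n) (x : F) k :
  root (char_poly B) x -> root (char_poly (B ^+ k)) (x ^+ k).
Proof.
rewrite -!eigenvalue_root_char => /eigenvalueP [v Hv nz].
apply/eigenvalueP; exists v => //.
elim: k => [|k IH]; first by rewrite !expr0 scale1r mulmx1.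
by rewrite exprSr -mulmxE mulmxA IH -scalemxAl Hv scalerA exprSr.
Qed.

Lemma spectral_pow (F : closedFieldType) n (B : 'M[F]_n) k (lam : F) :
  (0 < k)%N -> root (char_poly (B ^+ k)) lam ->
  exists2 r, root (char_poly B) r & r ^+ k = lam.
Proof.
move=> k0; case: n B => [|n] B.
  have := char_poly_monic (B ^+ k); rewrite monicE => /eqP.
  have := size_char_poly (B ^+ k) => Hs.
  rewrite /lead_coef Hs /= => Hc.
  have -> : char_poly (B ^+ k) = 1.
    apply/polyP => i; rewrite coefC; case: i => [|i] /=; first by rewrite Hc.
    by rewrite nth_default // Hs.
  by rewrite /root hornerC oner_eq0.
rewrite -eigenvalue_root_char => /eigenvalueP [v Hv nz].
have [rs Drs] := closed_field_poly_normal ('X^k - lam%:P : {poly F}).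
rewrite lead_coefXnsubC // scale1r in Drs.
have Hrs : forall r, r \in rs -> r ^+ k = lam.
  move=> r rin; have : root ('X^k - lam%:P) r by rewrite Drs root_prod_XsubC.
  by rewrite /root !hornerE subr_eq0 => /eqP.
have H0 : v *m horner_mx B ('X^k - lam%:P) = 0.
  rewrite rmorphB /= rmorphXn /= horner_mx_X horner_mx_C.
  by rewrite mulmxBr Hv mul_mx_scalar subrr.
rewrite Drs in H0.
elim: rs v nz Hrs H0 {Drs Hv} => [|r rs IH] v nz Hrs H0.
  by move: H0; rewrite big_nil rmorph1 mulmx1 => /eqP; rewrite (negPf nz).
move: H0; rewrite big_cons rmorphM /= -mulmxE mulmxA.
have [E|nE] := eqVneq (v *m horner_mx B ('X - r%:P)) 0.
  move=> _; exists r; last by apply: Hrs; rewrite mem_head.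
  rewrite -eigenvalue_root_char; apply/eigenvalueP; exists v => //.
  move: E; rewrite rmorphB /= horner_mx_X horner_mx_C mulmxBr.
  by rewrite mul_mx_scalar => /eqP; rewrite subr_eq0 => /eqP.
move=> H; apply: (IH _ nE) => //.
by move=> r' r'in; apply: Hrs; rewrite in_cons r'in orbT.
Qed.

Lemma prod_coef_bound (C : numDomainType) (rs : seq C) :
  all (fun z => `|z| <= 1) rs -> forall i,
  `|(\prod_(z <- rs) ('X - z%:P))`_i| <= ('C(size rs, i))%:R.
Proof.
elim: rs => [|z rs IH] /= Hall i.
  by rewrite big_nil coefC; case: i => [|i]; rewrite ?normr1 ?normr0 ?bin0 ?bin0n.
move/andP: Hall => [Hz Hall]; have {}IH := IH Hall.
rewrite big_cons mulrBl coefB coefXM coefCM.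
have H j : `|z * (\prod_(z0 <- rs) ('X - z0%:P))`_j| <= 'C(size rs, j)%:R.
  rewrite normrM -[_%:R]mul1r ler_pM //.
case: i => [|i] /=.
  by rewrite sub0r normrN bin0 -(bin0 (size rs)).
by apply: le_trans (ler_normB _ _) _; rewrite binS natrD addrC lerD.
Qed.

Lemma map_mxXn (R S : nzRingType) (f : {rmorphism R -> S}) n (A : 'M[R]_n) k :
  map_mx f (A ^+ k) = (map_mx f A) ^+ k.
Proof.
elim: k => [|k IH]; first by rewrite !expr0 map_mx1.
by rewrite !exprS -!mulmxE map_mxM IH.
Qed.

Lemma size_map_monic (R S : nzRingType) (f : {rmorphism R -> S}) (q : {poly R}) :
  q \is monic -> size (map_poly f q) = size q.
Proof. by move=> mq; rewrite size_map_poly_id0 // (monicP mq) rmorph1 oner_eq0. Qed.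

Lemma bin_le_exp2 n i : ('C(n, i) <= 2 ^ n)%N.
Proof.
elim: n i => [|n IH] [|i] //; rewrite ?bin0 ?expn_gt0 // binS expnS mul2n -addnn.
by rewrite leq_add.
Qed.

Section Kron.
Variable C : numClosedFieldType.

Lemma kron_poly_bound (q : {poly int}) n :
  q \is monic -> size q = n.+1 ->
  (forall z : C, root (map_poly intr q) z -> `|z| = 1) ->
  forall i, `|q`_i| <= (2 ^ n)%:R.
Proof.
move=> mq sq Hr i.
have [rs Drs] := closed_field_poly_normal (map_poly (intr : int -> C) q).
have lq : lead_coef (map_poly (intr : int -> C) q) = 1.
  by apply/monicP; rewrite monic_map.
rewrite lq scale1r in Drs.
have srs : size rs = n.
  have := congr1 (fun p : {poly C} => size p) Drs; rewrite /= size_prod_XsubC size_map_monic // sq.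
  by case.
have Hall : all (fun z : C => `|z| <= 1) rs.
  apply/allP => z zin; rewrite (Hr z) //.
  by rewrite Drs root_prod_XsubC.
have E : (\prod_(z <- rs) ('X - z%:P) : {poly C}) = map_poly intr q by rewrite -Drs.
have := @prod_coef_bound C rs Hall i; rewrite E coef_map /= -intr_norm srs.
move=> H; rewrite -(ler_int C); apply: (le_trans H).
by rewrite rmorph_nat ler_nat bin_le_exp2.
Qed.
End Kron.

Section Kron2.
Variable C : numClosedFieldType.

Lemma kronecker (p : {poly int}) (x : C) :
  p \is monic -> (forall z : C, root (map_poly intr p) z -> `|z| = 1) ->
  root (map_poly intr p) x -> exists2 m, (0 < m)%N & x ^+ m = 1.
Proof.
move=> mp Hp px.
have x0 : x != 0 by rewrite -normr_eq0 (Hp x px) oner_eq0.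
set n := (size p).-1.
have sp : size p = n.+1.
  by rewrite /n prednK // size_poly_gt0 monic_neq0.
pose Cm : 'M[int]_n := companionmx p.
have Cp : char_poly Cm = p by rewrite companionmxK.
pose B := map_mx (intr : int -> C) Cm.
have CB : char_poly B = map_poly intr p by rewrite -map_char_poly Cp.
pose q k := char_poly (Cm ^+ k).
have qE k : map_poly (intr : int -> C) (q k) = char_poly (B ^+ k).
  by rewrite map_char_poly map_mxXn.
have qmon k : q k \is monic by apply: char_poly_monic.
have qsize k : size (q k) = n.+1 by apply: size_char_poly.
have qroot k : (0 < k)%N -> forall z : C, root (map_poly intr (q k)) z -> `|z| = 1.
  move=> k0 z; rewrite qE => /(@spectral_pow C _ _ _ _ k0) [r rr <-].
  by rewrite normrX (Hp r) ?expr1n // -CB.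
have xroot k : root (map_poly intr (q k)) (x ^+ k).
  by rewrite qE; apply: eig_pow; rewrite CB.
have qbound k : (0 < k)%N -> forall i, `|(q k)`_i| <= (2 ^ n)%:R.
  by move=> k0; apply: (@kron_poly_bound C _ _ (qmon k) (qsize k) (qroot k k0)).
pose B0 := (2 ^ n)%N.
pose FT := {ffun 'I_n.+1 -> 'I_(B0.*2).+1}.
pose code k : FT := [ffun i : 'I_n.+1 => inord (absz ((q k)`_i + B0%:Z))].
pose decode (t : FT) : {poly int} := \poly_(i < n.+1) ((t (inord i))%:Z - B0%:Z).
have codeK k : (0 < k)%N -> decode (code k) = q k.
  move=> k0; apply/polyP => i; rewrite coef_poly.
  case: ltnP => [ilt|ige]; last by rewrite nth_default // qsize.
  rewrite ffunE /= (inordK ilt).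
  have := qbound k k0 i; set c := (q k)`_i => Hc.
  have E : ((2 ^ n)%:R : int) = B0%:Z by rewrite natz.
  move: Hc; rewrite E ler_norml; case/andP => Hc1 Hc2.
  have c0 : 0 <= c + B0%:Z by rewrite -[B0%:Z]opprK subr_ge0.
  rewrite inordK; last first.
    rewrite ltnS -lez_nat abszE ger0_norm //.
    by rewrite -addnn PoszD lerD2r.
  by rewrite abszE ger0_norm // addrK.
pose K := (n * #|{: FT}|).+1.
pose g (j : 'I_K) : FT := code j.+1.
have [t Ht] : exists t : FT, (n < #|[pred j | g j == t]|)%N.
  apply/existsP; apply: contraT; rewrite negb_exists => /forallP Hall.
  have : (K <= #|{: FT}| * n)%N.
    rewrite -{1}[K]card_ord -sum1_card (partition_big g xpredT) //=.
    rewrite -[X in (_ <= X * _)%N]sum1_card big_distrl /=.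
    apply: leq_sum => t _; rewrite mul1n.
    by rewrite sum1_card leqNgt; apply: Hall.
  by rewrite /K mulnC ltnn.
pose S := enum [pred j | g j == t].
pose L := [seq x ^+ (val j).+1 | j <- S].
have rootL : all (root (map_poly (intr : int -> C) (decode t))) L.
  apply/allP => _ /mapP [j jin ->].
  move: jin; rewrite mem_enum inE => /eqP <-.
  by rewrite /g codeK.
have dnz : map_poly (intr : int -> C) (decode t) != 0.
  have : (0 < #|[pred j | g j == t]|)%N by apply: leq_ltn_trans Ht.
  case/card_gt0P => j; rewrite inE => /eqP <-.
  by rewrite /g codeK // -size_poly_eq0 size_map_monic // qsize.
have sdec : size (map_poly (intr : int -> C) (decode t)) = n.+1.
  have : (0 < #|[pred j | g j == t]|)%N by apply: leq_ltn_trans Ht.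
  case/card_gt0P => j; rewrite inE => /eqP <-.
  by rewrite /g codeK // size_map_monic // qsize.
have : ~~ uniq L.
  apply/negP => uL; have := max_poly_roots dnz rootL uL.
  by rewrite sdec size_map /S -cardE ltnS leqNgt Ht.
case/(uniqPn 0) => a [b [ab bs]].
rewrite size_map in bs.
have as' : (a < size S)%N by apply: ltn_trans ab bs.
rewrite !(nth_map (ord0 : 'I_K)) // => E.
set ja := nth _ S a in E; set jb := nth _ S b in E.
have jab : (val ja < val jb)%N \/ (val jb < val ja)%N.
  have : ja != jb.
    by rewrite /ja /jb nth_uniq ?enum_uniq // neq_ltn ab.
  rewrite neq_ltn => /orP [H|H]; by [left|right].
case: jab => H.
  exists (val jb - val ja)%N; first by rewrite subn_gt0.
  apply: (mulfI (expf_neq0 (val ja).+1 x0)).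
  by rewrite mulr1 -exprD addSn subnKC ?(ltnW H) // E.
exists (val ja - val jb)%N; first by rewrite subn_gt0.
apply: (mulfI (expf_neq0 (val jb).+1 x0)).
by rewrite mulr1 -exprD addSn subnKC ?(ltnW H) // E.
Qed.
End Kron2.

Lemma exists_max_idx (C : numDomainType) (f : nat -> C) N :
  (0 < N)%N -> (forall i, 0 <= f i) ->
  exists2 i, (i < N)%N & forall j, (j < N)%N -> f j <= f i.
Proof.
move=> + f0; elim: N => // N IH _.
case: N IH => [|N] IH.
  by exists 0%N => // j; rewrite ltnS leqn0 => /eqP ->.
have [i iN Hi] := IH isT.
have := ger_leVge (f0 i) (f0 N.+1); case/orP => H.
  exists N.+1 => // j; rewrite ltnS leq_eqVlt => /orP [/eqP ->//|jN].
  by apply: le_trans (Hi _ jN) H.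
exists i; first by apply: ltn_trans iN _.
by move=> j; rewrite ltnS leq_eqVlt => /orP [/eqP ->//|jN]; apply: Hi.
Qed.

Lemma exists_min_idx (C : numDomainType) (f : nat -> C) N :
  (0 < N)%N -> (forall i, 0 <= f i) ->
  exists2 i, (i < N)%N & forall j, (j < N)%N -> f i <= f j.
Proof.
move=> + f0; elim: N => // N IH _.
case: N IH => [|N] IH.
  by exists 0%N => // j; rewrite ltnS leqn0 => /eqP ->.
have [i iN Hi] := IH isT.
have := ger_leVge (f0 i) (f0 N.+1); case/orP => H.
  exists i; first by apply: ltn_trans iN _.
  by move=> j; rewrite ltnS leq_eqVlt => /orP [/eqP ->//|jN]; apply: Hi.
exists N.+1 => // j; rewrite ltnS leq_eqVlt => /orP [/eqP ->//|jN].
by apply: le_trans H (Hi _ jN).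
Qed.

Lemma count_roots (C : numFieldType) (P : {poly C}) (N : nat) (u : nat -> C) :
  (2 <= N)%N -> ~~ root P 1 -> (forall i, (i < N)%N -> u i != 0) ->
  (forall i j, (i < N)%N -> (j < N)%N -> i != j -> root P (u i / u j)) ->
  `|u 0%N| != `|u 1%N| ->
  exists s : seq C, [/\ uniq s, size s = N.-1, all (root P) s
                      & all (fun x => `|x| != 1) s].
Proof.
move=> N2 nP1 u0 uR n01.
have N0 : (0 < N)%N by apply: ltn_trans N2.
have [a aN Ha] := @exists_max_idx C (fun i => `|u i|) N N0 (fun i => normr_ge0 _).
have [b bN Hb] := @exists_min_idx C (fun i => `|u i|) N N0 (fun i => normr_ge0 _).
have mM : `|u b| < `|u a|.
  rewrite lt_neqAle (le_trans (Hb _ N0) (Ha _ N0)) andbT.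
  apply: contra n01 => /eqP E; apply/eqP.
  apply: le_anti; rewrite (le_trans (Ha _ N0) _) /=; last by rewrite -E Hb.
  by rewrite (le_trans (Ha _ N2) _) //= -E Hb.
pose g j := if `|u j| < `|u a| then u a / u j else u b / u j.
have ratio_neq i j : (i < N)%N -> (j < N)%N -> u i / u j = 1 -> i = j.
  move=> iN jN E; apply/eqP; apply: contraNT nP1 => ij.
  by rewrite -E uR.
have gR j : (j < N)%N -> root P (g j).
  move=> jN; rewrite /g; case: ifP => H.
    by apply: uR => //; apply: contraTneq H => ->; rewrite ltxx.
  apply: uR => //; apply/eqP => E; move: H; rewrite -E mM //.
have g1 j : (j < N)%N -> `|u j| < `|u a| -> 1 < `|u a / u j|.
  move=> jN H; rewrite normrM normrV ?unitfE ?u0 //.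
  have nj : 0 < `|u j| by rewrite normr_gt0 u0.
  by rewrite -(ltr_pM2r nj) mul1r -mulrA mulVf ?mulr1 // gt_eqF.
have g2 j : (j < N)%N -> ~~ (`|u j| < `|u a|) -> `|u b / u j| < 1.
  move=> jN H; rewrite normrM normrV ?unitfE ?u0 //.
  have nj : 0 < `|u j| by rewrite normr_gt0 u0.
  have Ej : `|u j| = `|u a| by apply: le_anti; rewrite Ha //= real_leNgt ?normr_real.
  by rewrite -(ltr_pM2r nj) mul1r -mulrA mulVf ?mulr1 ?gt_eqF // Ej.
have gN j : (j < N)%N -> `|g j| != 1.
  move=> jN; rewrite /g; case: ifP => H.
    by rewrite gt_eqF // g1.
  by rewrite lt_eqF // g2 ?H.
exists [seq g j | j <- iota 0 N.-1]; split.
- rewrite map_inj_in_uniq ?iota_uniq // => i j.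
  rewrite !mem_iota !add0n => iN jN.
  have iN' : (i < N)%N by apply: leq_trans iN (leq_pred _).
  have jN' : (j < N)%N by apply: leq_trans jN (leq_pred _).
  rewrite /g; case: ifP => Hi; case: ifP => Hj E.
  + have : (u i)^-1 = (u j)^-1 by apply: (mulfI (u0 _ aN)).
    move/invr_inj => Eij; apply: (ratio_neq _ _ iN' jN').
    by rewrite Eij divff ?u0.
  + by have := g1 _ iN' Hi; rewrite E => /(lt_trans (g2 _ jN' (negbT Hj))); rewrite ltxx.
  + by have := g1 _ jN' Hj; rewrite -E => /(lt_trans (g2 _ iN' (negbT Hi))); rewrite ltxx.
  + have : (u i)^-1 = (u j)^-1 by apply: (mulfI (u0 _ bN)).
    move/invr_inj => Eij; apply: (ratio_neq _ _ iN' jN').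
    by rewrite Eij divff ?u0.
- by rewrite size_map size_iota.
- apply/allP => x /mapP [j]; rewrite mem_iota add0n => jN ->.
  by apply: gR; apply: leq_trans jN (leq_pred _).
- apply/allP => x /mapP [j]; rewrite mem_iota add0n => jN ->.
  by apply: gN; apply: leq_trans jN (leq_pred _).
Qed.

Section Trig.
Variable R : realType.

Lemma expiD (a b : R) : expi (a + b) = expi a * expi b.
Proof.
rewrite /expi mulrDr cosD sinD /=.
by congr Complex; rewrite addrC.
Qed.

Lemma expi0 : expi (0 : R) = 1.
Proof. by rewrite /expi mulr0 cos0 sin0. Qed.

Lemma expi_neq0 (a : R) : expi a != 0.
Proof.
apply/negP => /eqP H.
have := expiD a (- a); rewrite subrr expi0 H mul0r => /eqP.
by rewrite oner_eq0.
Qed.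

Lemma expiB (a b : R) : expi (a - b) = expi a / expi b.
Proof.
apply: (mulIf (expi_neq0 b)); rewrite -expiD subrK mulfVK //.
exact: expi_neq0.
Qed.

Lemma expiMn (a : R) m : expi (a *+ m) = expi a ^+ m.
Proof.
elim: m => [|m IH]; first by rewrite mulr0n expi0 expr0.
by rewrite mulrSr expiD IH exprSr.
Qed.

Lemma cos2piz (k : int) : cos (2 * pi * k%:~R) = 1 :> R.
Proof.
have H n : cos (2 * pi * n%:R) = 1 :> R.
  rewrite mulr_natl mulr_natr -[X in cos X]add0r.
  by rewrite periodicn ?cos0 //; apply: cosD2pi.
case: k => n; first by rewrite -pmulrn H.
by rewrite NegzE rmorphN /= mulrN cosN -pmulrn H.
Qed.

Lemma sin2piz (k : int) : sin (2 * pi * k%:~R) = 0 :> R.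
Proof.
have H n : sin (2 * pi * n%:R) = 0 :> R.
  rewrite mulr_natl mulr_natr -[X in sin X]add0r.
  by rewrite periodicn ?sin0 //; apply: sinD2pi.
case: k => n; first by rewrite -pmulrn H.
by rewrite NegzE rmorphN /= mulrN sinN -pmulrn H oppr0.
Qed.

Lemma expi_eq1 (t : R) : expi t = 1 -> exists k : int, t = k%:~R.
Proof.
case => Hc _.
have Hs : sin (2 * pi * t) = 0.
  by apply: cos1sin0; rewrite Hc normr1.
exists (Num.floor t).
set k := Num.floor t; set u := t - k%:~R.
have /andP [u0 u1] : 0 <= u < 1.
  have := floor_itv t; rewrite -/k => /andP [H1 H2].
  by rewrite subr_ge0 H1 /= ltrBlDl; move: H2; rewrite intrD.
have Hcu : cos (2 * pi * u) = 1.
  by rewrite mulrBr cosB Hc Hs cos2piz sin2piz mulr0 addr0 mulr1.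
have pi0 := @pi_gt0 R.
suff : u = 0 by move/eqP; rewrite subr_eq0 => /eqP.
have x0 : 0 <= 2 * pi * u by rewrite mulr_ge0 // mulr_ge0 // ltW.
have [xpi|pix] := leP (2 * pi * u) pi.
  have : 2 * pi * u = 0.
    apply: cos_inj; rewrite ?in_itv /= ?x0 ?xpi ?lexx ?pi_ge0 // cos0 //.
  by move/eqP; rewrite !mulf_eq0 (negbTE (lt0r_neq0 pi0)) /= pnatr_eq0 /= => /eqP.
exfalso.
have y0 : 0 < 2 * pi - 2 * pi * u.
  by rewrite subr_gt0 -{2}[2 * pi]mulr1 ltr_pM2l ?mulr_gt0.
have : 2 * pi - 2 * pi * u = 0.
  apply: cos_inj; rewrite ?in_itv /= ?(ltW y0) ?lexx ?pi_ge0 //.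
    by move: pix; set z := 2 * pi * u; move=> pix; lra.
  rewrite cos0 addrC [X in _ + X]mulr_natl.
  by rewrite cosD2pi cosN Hcu.
by move/eqP; rewrite (negbTE (lt0r_neq0 y0)).
Qed.

Lemma expi_not_unity (t : R) : irrational t ->
  forall m, (0 < m)%N -> expi t ^+ m != 1.
Proof.
move=> Hirr m m0; apply/negP => /eqP.
rewrite -expiMn => /expi_eq1 [k Hk]; apply: Hirr.
apply/rationalP; exists k, m.
by rewrite -Hk -[t *+ m]mulr_natr mulfK // pnatr_eq0 -lt0n.
Qed.
End Trig.

Section NF.
Variable L : numFieldType.
Local Notation QtoL := (@ratr L).
Local Notation pQtoL := (map_poly (@ratr L)).

Lemma alg_add (u v : L) : algebraicOver QtoL u -> algebraicOver QtoL v ->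
  algebraicOver QtoL (u + v).
Proof. by move=> /integral_algebraic Hu /integral_algebraic Hv; apply/integral_algebraic/integral_add. Qed.

Lemma alg_opp (u : L) : algebraicOver QtoL u -> algebraicOver QtoL (- u).
Proof. by move=> /integral_algebraic Hu; apply/integral_algebraic/integral_opp. Qed.

Lemma alg_mul (u v : L) : algebraicOver QtoL u -> algebraicOver QtoL v ->
  algebraicOver QtoL (u * v).
Proof. by move=> /integral_algebraic Hu /integral_algebraic Hv; apply/integral_algebraic/integral_mul. Qed.

Lemma alg_nat n : algebraicOver QtoL n%:R.
Proof. by apply/integral_algebraic/integral_nat. Qed.

Lemma PET_L (s : seq L) : (forall x, x \in s -> algebraicOver QtoL x) ->
  exists2 z, algebraicOver QtoL z &
  (exists a : nat ^ size s, z = \sum_(i < size s) s`_i *+ a i)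
  /\ exists ps, s = [seq (pQtoL p).[z] | p <- ps].
Proof.
elim: s => [|x s IH] Hs.
  exists 0; first exact: alg_nat 0.
  by split; [exists [ffun _ => 2%N]; rewrite big_ord0 | exists nil].
have [|z Az [[a Dz] [ps Ds]]] := IH.
  by move=> y ys; apply: Hs; rewrite in_cons ys orbT.
have [rx nz_rx rx0] : algebraicOver QtoL x by apply: Hs; rewrite mem_head.
have [rz nz_rz rz0] : algebraicOver QtoL (- z) by apply: alg_opp.
have pchar0_Q: [pchar rat] =i pred0 by apply: pchar_num.
have [n [[pz Dpz] [px Dpx]]] := pchar0_PET nz_rz rz0 nz_rx rx0 pchar0_Q.
exists (x *+ n - - z).
  by apply: alg_add; [rewrite -mulr_natl; apply: alg_mul; [apply: alg_nat|apply: Hs; rewrite mem_head] | rewrite opprK].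
split.
  exists [ffun i => oapp a n (unlift ord0 i)].
  rewrite /= big_ord_recl ffunE unlift_none opprK Dz; congr (_ + _).
  by apply: eq_bigr => i _; rewrite ffunE liftK.
exists (px :: [seq p \Po (- pz) | p <- ps]); rewrite /=; congr (_ :: _); first by rewrite Dpx.
rewrite -map_comp Ds; apply: eq_map => p /=.
rewrite map_comp_poly horner_comp rmorphN hornerN Dpz opprK.
by [].
Qed.
End NF.

Lemma alg_num_field' (Qz : fieldExtType rat) a : a%:A = ratr a :> Qz.
Proof. by rewrite -in_algE fmorph_eq_rat. Qed.

Lemma rmorphZ_num' (Qz : fieldExtType rat) (rR : unitRingType) (f : {rmorphism Qz -> rR}) a x :
  f (a *: x) = ratr a * f x.
Proof. by rewrite -mulr_algl rmorphM alg_num_field' fmorph_rat. Qed.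

Section NF2.
Variable L : numFieldType.
Local Notation QtoL := (@ratr L).
Local Notation pQtoL := (map_poly (@ratr L)).

Lemma min_poly_exists (z : L) : algebraicOver QtoL z ->
  exists r : {poly rat}, [/\ r != 0, root (pQtoL r) z &
    forall q, root (pQtoL q) z -> q != 0 -> (size r <= size q)%N].
Proof.
case=> r0 nz0 rt0.
have [m lem] := ubnP (size r0); elim: m r0 nz0 rt0 lem => // m IH r0 nz0 rt0 lem.
case: (classic (forall q, root (pQtoL q) z -> q != 0 -> (size r0 <= size q)%N)) => H.
  by exists r0.
have [q Hq] := not_all_ex_not _ _ H.
case: (classic (root (pQtoL q) z)) => Hq1; last by exfalso; apply: Hq => //.
case: (classic (q != 0)) => Hq2; last by exfalso; apply: Hq => //.
apply: (IH q Hq2 Hq1).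
rewrite -ltnS (leq_trans _ lem) // ltnS ltnNge.
by apply/negP => H2; apply: Hq => _ _.
Qed.

Lemma numfield_exists_L (s : seq L) : (forall x, x \in s -> algebraicOver QtoL x) ->
  exists (Qs : fieldExtType rat) (QsL : {rmorphism Qs -> L}) (s1 : seq Qs),
    map QsL s1 = s /\ <<1 & s1>>%VS = fullv.
Proof.
move=> Hs.
have [z Az [[a Dz] [ps Ds]]] := @PET_L L s Hs.
have [r [nz_r rz0 rmin]] := @min_poly_exists z Az.
have irr_r: irreducible_poly r by apply/(subfx_irreducibleP rz0 nz_r).
suffices [Qs [QsL [z1 [z1C z1gen]]]] : exists (Qs : fieldExtType rat) (QsL : {rmorphism Qs -> L}) (z1 : Qs),
    QsL z1 = z /\ forall xx : Qs, exists p, fieldExt_horner z1 p = xx.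
set inQs := fieldExt_horner z1 in z1gen *; pose s1 := map inQs ps.
have Sinj_poly p : map_poly QsL (map_poly (in_alg Qs) p) = pQtoL p.
  rewrite -map_poly_comp; apply: eq_map_poly => b.
  by rewrite /= alg_num_field' fmorph_rat.
have inQsK p: QsL (inQs p) = (pQtoL p).[z].
  rewrite /= -horner_map z1C -map_poly_comp; congr _.[z].
  by apply: eq_map_poly => b /=; rewrite alg_num_field' fmorph_rat.
exists Qs, QsL, s1; split; first by rewrite -map_comp Ds (eq_map inQsK).
have sz_ps: size ps = size s by rewrite Ds size_map.
apply/vspaceP=> x; rewrite memvf; have [p {x}<-] := z1gen x.
elim/poly_ind: p => [|p b ApQs]; first by rewrite /inQs rmorph0 mem0v.
rewrite /inQs rmorphD rmorphM /= fieldExt_hornerX fieldExt_hornerC -/inQs /=.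
suffices ->: z1 = \sum_(i < size s) s1`_i *+ a i.
  rewrite memvD ?memvZ ?mem1v ?memvM ?memv_suml // => i _.
  by rewrite rpredMn ?seqv_sub_adjoin ?mem_nth // size_map sz_ps.
apply: (fmorph_inj QsL); rewrite z1C Dz rmorph_sum; apply: eq_bigr => i _.
by rewrite rmorphMn {1}Ds !(nth_map 0) ?sz_ps //= inQsK.
exists (SubFieldExtType rz0 irr_r), (@subfx_inj _ _ QtoL z r).
exists (subfx_root _ z r); split; first exact: subfx_inj_root.
by move=> x; have{x} [p ->] := subfxEroot rz0 nz_r x; exists p.
Qed.
End NF2.

Lemma extend_hom (Qs : fieldExtType rat) (s1 : seq Qs) (p : {poly rat}) :
  <<1 & s1>>%VS = fullv ->
  map_poly (in_alg Qs) p = \prod_(y <- s1) ('X - y%:P) ->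
  forall w y : Qs, root (minPoly 1 w) y ->
  exists f : {rmorphism Qs -> Qs}, f w = y.
Proof.
move=> gen Dp w y wy.
have hom1 : kHom 1 (1%AS : {subfield Qs}) \1 := kHom1 _ _.
have ry : root (map_poly \1%VF (minPoly 1 w)) y.
  rewrite (eq_map_poly (fun v => id_lfunE v)) map_poly_id //.
pose g := kHomExtend 1 \1%VF w y.
have homg : kHom 1 <<1; w>> g := kHomExtendP (sub1v _) hom1 ry.
have gw : g w = y := kHomExtend_val hom1 ry.
pose pr := map_poly (in_alg Qs) p.
have Qpr : pr \is a polyOver 1%VS.
  by apply/polyOverP=> i; rewrite coef_map memvZ ?memv_line.
have split1 : splittingFieldFor 1 pr fullv.
  by exists s1; rewrite ?gen // /pr Dp eqpxx.
have splitE : splittingFieldFor <<1; w>> pr fullv.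
  by apply: splittingFieldForS split1; rewrite ?sub1v ?subvf.
have [h homh Dh] := kHom_extends (sub1v _) homg Qpr splitE.
have hw : h w = y by rewrite -Dh ?memv_adjoin.
pose hmM := GRing.isMonoidMorphism.Build _ _ h (kHom_monoid_morphism homh).
pose nu : {lrmorphism _ -> _} := HB.pack (fun_of_lfun h) hmM.
by exists nu.
Qed.

Lemma monic_dvd_int (q : {poly rat}) (AZ : {poly int}) :
  q \is monic -> AZ \is monic -> q %| map_poly intr AZ ->
  exists qZ : {poly int}, qZ \is monic /\ map_poly intr qZ = q.
Proof.
move=> mq mA H.
have [p1 [a a0 Dq] [r Dr]] := dvdpP_rat_int H.
have l1 : lead_coef p1 * lead_coef r = 1 by rewrite -lead_coefM -Dr (monicP mA).
have l2 : (lead_coef p1) ^+ 2 = 1.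
  have : (`|lead_coef p1| * `|lead_coef r| = 1)%N by rewrite -abszM l1.
  move/eqP; rewrite muln_eq1 => /andP [/eqP H1 _].
  by rewrite -real_normK ?num_real // -abszE H1.
set l := lead_coef p1 in l1 l2 *.
have la : a * l%:~R = 1.
  have := monicP mq; rewrite Dq lead_coefZ lead_coef_map_inj //; exact: intr_inj.
have al : a = l%:~R.
  have : a * l%:~R * l%:~R = l%:~R by rewrite la mul1r.
  by rewrite -mulrA -rmorphM /= -expr2 l2 rmorph1 mulr1.
exists (l *: p1); split.
  by rewrite monicE lead_coefZ -/l -expr2 l2.
by rewrite map_polyZ /= -al Dq.
Qed.

Lemma sumXn_coef (Rg : nzRingType) (s : seq nat) : uniq s ->
  forall i, (\sum_(a <- s) 'X^a : {poly Rg})`_i = (i \in s)%:R.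
Proof.
elim: s => [|a s IH] /=; first by move=> _ i; rewrite big_nil coef0.
case/andP => anin us i; rewrite big_cons coefD coefXn IH // in_cons.
case: (eqVneq i a) => [->|ia] /=; last by rewrite add0r.
by rewrite (negbTE anin) addr0.
Qed.

Lemma seq_max (s : seq nat) : s != [::] ->
  exists2 m, m \in s & forall a, a \in s -> (a <= m)%N.
Proof.
elim: s => // a [|b s] IH _.
  by exists a; rewrite ?mem_head // => x; rewrite inE => /eqP ->.
have [m min mmax] := IH isT.
case: (leqP a m) => H.
  exists m; first by rewrite in_cons min orbT.
  by move=> x; rewrite in_cons => /orP [/eqP ->|]; [|apply: mmax].
exists a; first by rewrite mem_head.
move=> x; rewrite in_cons => /orP [/eqP ->//|/mmax xm].
by apply: leq_trans xm (ltnW H).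
Qed.

Lemma sumXn_monic (Rg : nzRingType) (s : seq nat) : uniq s -> s != [::] ->
  (\sum_(a <- s) 'X^a : {poly Rg}) \is monic.
Proof.
move=> us ns; have [m min mmax] := @seq_max s ns.
set p := \sum_(a <- s) 'X^a.
have cp := sumXn_coef Rg s us.
have sz : size p = m.+1.
  apply/eqP; rewrite eqn_leq; apply/andP; split.
    apply/leq_sizeP => j mj; rewrite cp; case js: (j \in s) => //.
    by have := mmax j js; rewrite leqNgt mj.
  rewrite ltnNge; apply/negP => /leq_sizeP /(_ m (leqnn m)) /eqP.
  by rewrite cp min /= oner_eq0.
by rewrite monicE /lead_coef sz /= cp min.
Qed.

Lemma sumXn_eval1 (Rg : nzRingType) (s : seq nat) :
  (\sum_(a <- s) 'X^a : {poly Rg}).[1] = (size s)%:R.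
Proof.
elim: s => [|a s IH]; first by rewrite big_nil hornerC.
by rewrite big_cons hornerD hornerXn expr1n IH /= -natr1 addrC.
Qed.

Local Open Scope fset_scope.

Theorem mainTheorem10 (R : realType) (A : {fset nat}) (theta : nat -> R) :
  0%N \in A -> (2 <= #|` A|)%N ->
  is_spectrum A theta -> @irrational R (theta 1%N) ->
  exists s : seq R[i],
    [/\ uniq s, size s = (#|` A|).-1,
        all (root (@Apoly R A)) s & all (fun x => `|x| != 1) s].
Proof.
move=> A0 N2 [th0 thr thd thA] Hirr.
set N := #|` A| in N2 thr thd thA *.
pose AZ : {poly int} := \sum_(a <- A) 'X^a.
have AP : @Apoly R A = map_poly intr AZ.
  rewrite /Apoly rmorph_sum; apply: eq_bigr => a _ /=.
  by apply/polyP => j; rewrite coef_map /= !coefXn; case: (j == a).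
have mAZ : AZ \is monic.
  apply: sumXn_monic; first exact: fset_uniq.
  apply/eqP => E; have : (0%N \in (A : seq nat)) := A0; by rewrite E.
set AL := @Apoly R A.
have nr1 : ~~ root AL 1.
  rewrite /root /AL /Apoly sumXn_eval1 pnatr_eq0 -lt0n.
  by apply: leq_trans N2.
pose u i := expi (theta i).
have uR i j : (i < N)%N -> (j < N)%N -> i != j -> root AL (u i / u j).
  by move=> iN jN ij; rewrite /root /u -expiB thA.
have u0 : u 0%N = 1 by rewrite /u th0 expi0.
have unz i : u i != 0 by apply: expi_neq0.
have N1 : (1 < N)%N by [].
have N0 : (0 < N)%N by apply: ltn_trans N1.
have uroot i : (0 < i < N)%N -> root AL (u i).
  by case/andP => i0 iN; have := uR i 0%N iN N0; rewrite u0 divr1 -lt0n; apply.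
have mAL : AL \is monic by rewrite /AL AP monic_map.
have [rs Drs] := closed_field_poly_normal AL.
rewrite (monicP mAL) scale1r in Drs.
have inrs z : root AL z -> z \in rs by rewrite {1}Drs root_prod_XsubC.
pose pQ : {poly rat} := map_poly intr AZ.
have pQL : map_poly ratr pQ = AL.
  rewrite /pQ /AL AP -map_poly_comp; apply: eq_map_poly => z /=.
  by rewrite ratr_int.
have pQnz : pQ != 0 by rewrite monic_neq0 // monic_map.
have alg : forall x, x \in rs -> algebraicOver (@ratr R[i]) x.
  by move=> x xin; exists pQ => //; rewrite pQL Drs root_prod_XsubC.
have [Qs [QsL [s1 [Ds1 gen]]]] := @numfield_exists_L R[i] rs alg.
have inalgE q : map_poly (in_alg Qs) q = map_poly ratr q.
  by apply: eq_map_poly => c; exact: alg_num_field'.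
have mapQ (K : fieldType) (g : {rmorphism Qs -> K}) (q : {poly rat}) :
    map_poly g (map_poly (ratr : rat -> Qs) q) = map_poly ratr q.
  by rewrite -map_poly_comp; apply: eq_map_poly => c /=; rewrite fmorph_rat.
have P1 : map_poly (in_alg Qs) pQ = \prod_(y <- s1) ('X - y%:P).
  apply: (map_poly_inj QsL); rewrite inalgE mapQ pQL Drs rmorph_prod -Ds1 big_map.
  by apply: eq_bigr => y _; rewrite rmorphB /= map_polyX map_polyC.
have evalQ (K : fieldType) (g : {rmorphism Qs -> K}) (q : {poly rat}) (y : Qs) :
    g ((map_poly ratr q).[y]) = (map_poly ratr q).[g y].
  by rewrite -horner_map mapQ.
pose pQs : {poly Qs} := map_poly ratr pQ.
have rootQs (y : Qs) : root pQs y = root AL (QsL y).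
  by rewrite /root -pQL -evalQ fmorph_eq0.
pose w i : Qs := if i == 0%N then 1 else nth 0 s1 (index (u i) rs).
have Qw i : (i < N)%N -> QsL (w i) = u i.
  rewrite /w; case: (eqVneq i 0%N) => [->|i0] iN; first by rewrite rmorph1 u0.
  have uin : u i \in rs by apply: inrs; apply: uroot; rewrite lt0n i0.
  have sz : size s1 = size rs by rewrite -Ds1 size_map.
  by rewrite -(nth_map 0 0) ?Ds1 ?nth_index // sz index_mem.
have wnz i : (i < N)%N -> w i != 0.
  by move=> iN; rewrite -(fmorph_eq0 QsL) Qw.
have wR i j : (i < N)%N -> (j < N)%N -> i != j -> root pQs (w i / w j).
  by move=> iN jN ij; rewrite rootQs fmorph_div !Qw //; apply: uR.
have w0 : w 0%N = 1 by [].
have rw1 : root pQs (w 1%N).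
  by have := wR 1%N 0%N N1 N0 isT; rewrite w0 divr1.
have [f Hf] : exists f : {rmorphism Qs -> Qs}, `|QsL (f (w 1%N))| != 1.
  apply: NNPP => Hno.
  have Hall (f : {rmorphism Qs -> Qs}) : `|QsL (f (w 1%N))| = 1.
    by apply/eqP; apply/negPn/negP => H; apply: Hno; exists f.
  have /polyOver1P [q Dq] := minPolyOver 1 (w 1%N).
  have mq : q \is monic by rewrite -(map_monic (in_alg Qs)) -Dq monic_minPoly.
  have rq (y : Qs) : root (minPoly 1 (w 1%N)) y = root (map_poly ratr q) y.
    by rewrite Dq inalgE.
  have qdvd : q %| pQ.
    rewrite -(dvdp_map (in_alg Qs)) -Dq; apply: minPoly_dvdp.
      by apply/polyOver1P; exists pQ.
    by rewrite inalgE.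
  have [qZ [mqZ DqZ]] := monic_dvd_int q AZ mq mAZ qdvd.
  have qZL : map_poly (intr : int -> R[i]) qZ = map_poly ratr q.
    by rewrite -DqZ -map_poly_comp; apply: eq_map_poly => z /=; rewrite ratr_int.
  have qAL : map_poly ratr q %| AL by rewrite -pQL dvdp_map.
  have [m m0 um] : exists2 m, (0 < m)%N & u 1%N ^+ m = 1.
    apply: (@kronecker R[i] qZ (u 1%N) mqZ).
      move=> z; rewrite qZL => rz.
      have zAL : root AL z by apply: root_dvdp rz.
      have := inrs z zAL; rewrite -Ds1 => /mapP [y yin Ez].
      have ry : root (minPoly 1 (w 1%N)) y.
        by rewrite rq /root -(fmorph_eq0 QsL) evalQ -Ez.
      have [g gw] := extend_hom Qs s1 pQ gen P1 (w 1%N) y ry.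
      by rewrite Ez -gw; apply: Hall.
    rewrite qZL -Qw // /root -evalQ fmorph_eq0; have := root_minPoly 1 (w 1%N); by rewrite rq.
  by have := expi_not_unity R (theta 1%N) Hirr m m0; rewrite um eqxx.
pose v i := QsL (f (w i)).
have vnz i : (i < N)%N -> v i != 0.
  by move=> iN; rewrite /v !fmorph_eq0 wnz.
have vR i j : (i < N)%N -> (j < N)%N -> i != j -> root AL (v i / v j).
  move=> iN jN ij; rewrite /v -!fmorph_div -rootQs.
  by rewrite /root -evalQ; have := wR i j iN jN ij; rewrite /root => /eqP ->; rewrite rmorph0.
have v01 : `|v 0%N| != `|v 1%N| by rewrite /v w0 !rmorph1 normr1 eq_sym.
have [s [us ss as' ns]] := @count_roots R[i] AL N v N2 nr1 vnz vR v01.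
by exists s; split.
Qed.
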